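(* Let $A$ be a finite-dimensional Hopf algebra over $k$ and $\tau$ a Hopf automorphism of $A$ whose order divides $m$. (i) If $\Lambda_r$ is a right integral of $A$ and $\lambda_r$ a right integral of $A^*$ with $\lambda_r(\Lambda_r)=1$, then $\nu_{m,\tau}(A)=\lambda_r\big(\Lambda_r^{[m,\tau]}\big)$. (ii) If $\Lambda_l$ is a left integral of $A$ and $\lambda_l$ a left integral of $A^*$ with $\lambda_l(\Lambda_l)=1$, then $\nu_{m,\tau}(A)=\lambda_l\big(\tau^{-1}\cdot\Lambda_l^{[m,\tau^{-1}]}\big)$.
   Context: For $a\in A$, $P_{m-1,\tau}(a)=\sum(\tau^{m-1}\cdot a_1)(\tau^{m-2}\cdot a_2)\cdots(\tau\cdot a_{m-1})$ (Sweedler notation), and the $m$th twisted Frobenius–Schur indicator is $\nu_{m,\tau}(A)=\mathrm{Tr}(S\circ P_{m-1,\tau})$, the trace of the linear map $S\circ P_{m-1,\tau}:A\to A$. For a Hopf automorphism $\sigma$ and $h\in A$, $h^{[m,\sigma]}=\sum h_1(\sigma\cdot h_2)\cdots(\sigma^{m-1}\cdot h_m)$. *)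

(* Defs.v *)
(* A finite-dimensional Hopf algebra over a field k is given
   by structure constants with respect to a basis e_0,...,e_{n-1}; elements
   of A are row vectors 'rV[k]_n, elements of A (x) A are n x n matrices
   (x (x) y  <->  x^T *m y), and linear functionals (elements of A^* ) are
   column vectors 'cV[k]_n. *)
From HB Require Import structures.
From mathcomp Require Import all_boot all_order all_algebra.
Set Implicit Arguments. Unset Strict Implicit. Unset Printing Implicit Defensive.
Import Order.TTheory GRing.Theory Num.Theory.
Local Open Scope ring_scope.

Record hopf_data (k : fieldType) (n : nat) := HopfData {
  hmul : 'I_n -> 'I_n -> 'I_n -> k;     (* e_i e_j = sum_l hmul i j l e_l *)
  hunit : 'I_n -> k;                    (* 1 = sum_l hunit l e_l *)
  hcomul : 'I_n -> 'I_n -> 'I_n -> k;   (* Delta e_i = sum_{j,l} hcomul i j l e_j (x) e_l *)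
  hcounit : 'I_n -> k;
  hanti : 'M[k]_n                       (* S x = x *m hanti *)
}.

Section HopfDefs.
Variables (k : fieldType) (n : nat) (H : hopf_data k n).

Definition bvec (i : 'I_n) : 'rV[k]_n := delta_mx 0 i.

Definition mulA (x y : 'rV[k]_n) : 'rV[k]_n :=
  \row_l \sum_i \sum_j x 0 i * y 0 j * hmul H i j l.
Definition oneA : 'rV[k]_n := \row_l hunit H l.
Definition comulA (x : 'rV[k]_n) : 'M[k]_n :=
  \matrix_(j, l) \sum_i x 0 i * hcomul H i j l.
Definition epsA (x : 'rV[k]_n) : k := \sum_i x 0 i * hcounit H i.
Definition antiA (x : 'rV[k]_n) : 'rV[k]_n := x *m hanti H.

Definition is_hopf : Prop :=
  [/\ (forall x y z, mulA (mulA x y) z = mulA x (mulA y z)),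
      (forall x, mulA oneA x = x /\ mulA x oneA = x),
      (* coassociativity *)
      (forall i j1 j2 j3,
         \sum_l hcomul H i l j3 * hcomul H l j1 j2
         = \sum_l hcomul H i j1 l * hcomul H l j2 j3),
      (* counit *)
      (forall i j, \sum_l hcomul H i j l * hcounit H l = (j == i)%:R
                /\ \sum_l hcomul H i l j * hcounit H l = (j == i)%:R)
  & [/\ 
      (* Delta is an algebra map *)
       (forall x y, comulA (mulA x y) =
         \matrix_(j, l) \sum_a \sum_b \sum_c \sum_d
            comulA x a b * comulA y c d * hmul H a c j * hmul H b d l)
        /\ comulA oneA = oneA^T *m oneA,
      (forall x y, epsA (mulA x y) = epsA x * epsA y) /\ epsA oneA = 1
    & (* antipode: sum S(a_1) a_2 = eps(a) 1 = sum a_1 S(a_2) *)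
      (forall x, \sum_j \sum_l comulA x j l *: mulA (antiA (bvec j)) (bvec l)
                   = epsA x *: oneA
              /\ \sum_j \sum_l comulA x j l *: mulA (bvec j) (antiA (bvec l))
                   = epsA x *: oneA)]].

(* tau acts by x |-> x *m T *)
Definition is_hopf_aut (T : 'M[k]_n) : Prop :=
  [/\ T \in unitmx,
      (forall x y, mulA (x *m T) (y *m T) = mulA x y *m T) /\
      oneA *m T = oneA,
      (forall x, comulA (x *m T) = T^T *m comulA x *m T),
      (forall x, epsA (x *m T) = epsA x)
    & (forall x, antiA (x *m T) = antiA x *m T)].

(* sw [:: F1; ...; Fr] a = sum (F1 . a_1) (F2 . a_2) ... (Fr . a_r)
   (Sweedler notation, r-fold iterated coproduct); for r = 0 it is eps(a) 1. *)
Fixpoint sw (fs : seq 'M[k]_n) (x : 'rV[k]_n) : 'rV[k]_n :=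
  match fs with
  | [::] => epsA x *: oneA
  | F :: fs' => \sum_j \sum_l comulA x j l *: mulA (bvec j *m F) (sw fs' (bvec l))
  end.

(* P_{m-1,tau}(a) = sum (tau^{m-1} a_1) (tau^{m-2} a_2) ... (tau a_{m-1}) *)
Definition Pmt (m : nat) (T : 'M[k]_n) (x : 'rV[k]_n) : 'rV[k]_n :=
  sw [seq T ^+ (m.-1 - i) | i <- iota 0 m.-1] x.

(* h^{[m,sigma]} = sum h_1 (sigma h_2) ... (sigma^{m-1} h_m) *)
Definition hbracket (m : nat) (Sg : 'M[k]_n) (h : 'rV[k]_n) : 'rV[k]_n :=
  sw [seq Sg ^+ i | i <- iota 0 m] h.

Definition mx_of_fun (f : 'rV[k]_n -> 'rV[k]_n) : 'M[k]_n :=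
  \matrix_(i, j) f (bvec i) 0 j.

Definition nu (m : nat) (T : 'M[k]_n) : k :=
  \tr (mx_of_fun (fun x => antiA (Pmt m T x))).

Definition evalf (phi : 'cV[k]_n) (x : 'rV[k]_n) : k := (x *m phi) 0 0.
(* product in A^* : (phi psi)(a) = sum phi(a_1) psi(a_2) *)
Definition dmul (phi psi : 'cV[k]_n) : 'cV[k]_n :=
  \col_i \sum_j \sum_l hcomul H i j l * phi j 0 * psi l 0.

Definition right_integral (L : 'rV[k]_n) : Prop :=
  forall x, mulA L x = epsA x *: L.
Definition left_integral (L : 'rV[k]_n) : Prop :=
  forall x, mulA x L = epsA x *: L.
(* the unit of A^* is eps, i.e. phi |-> phi(1) is the counit of A^* *)
Definition right_integral_dual (lam : 'cV[k]_n) : Prop :=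
  forall phi, dmul lam phi = evalf phi oneA *: lam.
Definition left_integral_dual (lam : 'cV[k]_n) : Prop :=
  forall phi, dmul phi lam = evalf phi oneA *: lam.

End HopfDefs.

(* Main.v *)
Require Import Defs.
From HB Require Import structures.
From mathcomp Require Import all_boot all_order all_algebra.
Import GRing.Theory.
Local Open Scope ring_scope.
Import Defs.
Set Implicit Arguments. Unset Strict Implicit. Unset Printing Implicit Defensive.


Section Basic.
Variables (k : fieldType) (n : nat) (H : hopf_data k n).
Local Notation A := 'rV[k]_n.
Local Notation e := (@bvec k n).
Local Notation mul := (mulA H).
Local Notation S := (antiA H).
Local Notation eps := (epsA H).
Local Notation one := (oneA H).

Definition lin (V : lmodType k) (f : A -> V) := forall x, f x = \sum_i x 0 i *: f (e i).

Lemma eE i j : e i 0 j = (j == i)%:R.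
Proof. by rewrite /bvec mxE eqxx. Qed.

Lemma sum_deltaV (V : lmodType k) (F : 'I_n -> V) i :
  \sum_p (p == i)%:R *: F p = F i.
Proof.
rewrite (bigD1 i) //= eqxx scale1r big1 ?addr0 // => p /negbTE ->.
by rewrite scale0r.
Qed.

Lemma sum_delta (F : 'I_n -> k) i : \sum_p (p == i)%:R * F p = F i.
Proof.
rewrite (bigD1 i) //= eqxx mul1r big1 ?addr0 // => p /negbTE ->.
by rewrite mul0r.
Qed.

Lemma sum_delta' (F : 'I_n -> k) i : \sum_p F p * (p == i)%:R = F i.
Proof.
rewrite (bigD1 i) //= eqxx mulr1 big1 ?addr0 // => p /negbTE ->.
by rewrite mulr0.
Qed.

Lemma row_expand (x : A) : x = \sum_i x 0 i *: e i.
Proof. exact: row_sum_delta. Qed.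

Section LinProps.
Variables (V : lmodType k) (f : A -> V) (hf : lin f).

Lemma linD x y : f (x + y) = f x + f y.
Proof.
rewrite hf (hf x) (hf y) -big_split; apply eq_bigr => i _.
by rewrite mxE scalerDl.
Qed.

Lemma linZ c x : f (c *: x) = c *: f x.
Proof.
rewrite hf (hf x) scaler_sumr; apply eq_bigr => i _.
by rewrite mxE scalerA.
Qed.

Lemma lin0 : f 0 = 0.
Proof. by rewrite -(scale0r 0) linZ scale0r. Qed.

Lemma linsum (I : Type) (r : seq I) (P : pred I) (F : I -> A) :
  f (\sum_(i <- r | P i) F i) = \sum_(i <- r | P i) f (F i).
Proof.
elim/big_rec2: _ => [|i y1 y2 _ <-]; first by rewrite lin0.
by rewrite linD.
Qed.

End LinProps.

Lemma linP (V : lmodType k) (f : A -> V) :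
  (forall c x y, f (c *: x + y) = c *: f x + f y) -> lin f.
Proof.
move=> hf.
have f0 : f 0 = 0.
  have := hf 1 0 0; rewrite !scale1r addr0 => h.
  by apply: (@addrI _ (f 0)); rewrite addr0 -h.
have fD x y : f (x + y) = f x + f y by have := hf 1 x y; rewrite !scale1r.
have fZ c x : f (c *: x) = c *: f x by have := hf c x 0; rewrite !addr0 f0 addr0.
move=> x; rewrite {1}(row_expand x).
elim/big_rec2: _ => [|i y1 y2 _ <-]; first by rewrite f0.
by rewrite fD fZ.
Qed.

Lemma lin_eq (V : lmodType k) (f g : A -> V) : lin f -> lin g ->
  (forall i, f (e i) = g (e i)) -> forall x, f x = g x.
Proof. by move=> hf hg fg x; rewrite hf hg; apply eq_bigr => i _; rewrite fg. Qed.

Lemma lin_comp (V : lmodType k) (f : A -> A) (g : A -> V) :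
  lin f -> lin g -> lin (fun x => g (f x)).
Proof. by move=> hf hg x; rewrite hf (linsum hg); apply eq_bigr => i _; rewrite (linZ hg). Qed.

Lemma lin_id : lin id.
Proof. exact: row_expand. Qed.

Lemma mulE_e i j l : mul (e i) (e j) 0 l = hmul H i j l.
Proof.
rewrite mxE (bigD1 i) //= [X in _ + X]big1 ?addr0; last first.
  move=> p /negbTE pi; rewrite big1 // => q _; by rewrite !eE pi !mul0r.
rewrite (bigD1 j) //= [X in _ + X]big1 ?addr0; last first.
  move=> q /negbTE qj; by rewrite !eE qj mulr0 mul0r.
by rewrite !eE !eqxx !mul1r.
Qed.

Lemma lin_mull y : lin (fun x => mul x y).
Proof.
apply: linP => c x z; apply/rowP => l; rewrite !mxE mulr_sumr -big_split.
apply eq_bigr => i _; rewrite mulr_sumr -big_split; apply eq_bigr => j _.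
by rewrite !mxE /= mulrDl mulrDl !mulrA.
Qed.

Lemma lin_mulr x : lin (mul x).
Proof.
apply: linP => c y z; apply/rowP => l; rewrite !mxE mulr_sumr -big_split.
apply eq_bigr => i _; rewrite mulr_sumr -big_split; apply eq_bigr => j _.
rewrite !mxE /= mulrDr mulrDl !mulrA; congr (_ + _).
by rewrite [x 0 i * c]mulrC.
Qed.

Lemma lin_S : lin S.
Proof. by apply: linP => c x y; rewrite /antiA mulmxDl scalemxAl. Qed.

Lemma eps_lin x : eps x = \sum_i x 0 i * eps (e i).
Proof.
rewrite /epsA; apply eq_bigr => i _; congr (_ * _).
by rewrite (bigD1 i) //= [X in _ + X]big1 ?addr0 ?eE ?eqxx ?mul1r // => p /negbTE pi; rewrite eE pi mul0r.
Qed.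

Lemma eps_e i : eps (e i) = hcounit H i.
Proof.
rewrite /epsA (bigD1 i) //= [X in _ + X]big1 ?addr0 ?eE ?eqxx ?mul1r // => p /negbTE pi; by rewrite eE pi mul0r.
Qed.

Lemma epsD x y : eps (x + y) = eps x + eps y.
Proof. by rewrite /epsA -big_split; apply eq_bigr => i _; rewrite mxE mulrDl. Qed.
Lemma epsZ c x : eps (c *: x) = c * eps x.
Proof. by rewrite /epsA mulr_sumr; apply eq_bigr => i _; rewrite mxE mulrA. Qed.

Definition SWd (V : lmodType k) (B : 'I_n -> 'I_n -> V) (x : A) : V :=
  \sum_j \sum_l comulA H x j l *: B j l.

Lemma comul_e i j l : comulA H (e i) j l = hcomul H i j l.
Proof.
rewrite mxE (bigD1 i) //= [X in _ + X]big1 ?addr0 ?eE ?eqxx ?mul1r // => p /negbTE pi; by rewrite eE pi mul0r.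
Qed.

Lemma SW_e (V : lmodType k) (B : 'I_n -> 'I_n -> V) i :
  SWd B (e i) = \sum_j \sum_l hcomul H i j l *: B j l.
Proof. by apply eq_bigr => j _; apply eq_bigr => l _; rewrite comul_e. Qed.

Lemma lin_SW (V : lmodType k) (B : 'I_n -> 'I_n -> V) : lin (SWd B).
Proof.
move=> x; rewrite /SWd.
under eq_bigr => j _ do under eq_bigr => l _ do rewrite mxE scaler_suml.
transitivity (\sum_i \sum_j \sum_l (x 0 i * hcomul H i j l) *: B j l).
  under eq_bigr => j _ do rewrite exchange_big.
  by rewrite exchange_big.
apply eq_bigr => i _; rewrite scaler_sumr; apply eq_bigr => j _.
rewrite scaler_sumr; apply eq_bigr => l _; by rewrite comul_e scalerA.
Qed.

Lemma eq_SW (V : lmodType k) (B B' : 'I_n -> 'I_n -> V) x :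
  (forall j l, B j l = B' j l) -> SWd B x = SWd B' x.
Proof. by move=> hB; apply eq_bigr => j _; apply eq_bigr => l _; rewrite hB. Qed.

Lemma SW_map (V : lmodType k) (g : A -> V) (B : 'I_n -> 'I_n -> A) x :
  lin g -> g (SWd B x) = SWd (fun j l => g (B j l)) x.
Proof.
move=> hg; rewrite /SWd (linsum hg); apply eq_bigr => j _.
rewrite (linsum hg); apply eq_bigr => l _; by rewrite (linZ hg).
Qed.

Lemma SW_scale (V : lmodType k) (B : 'I_n -> 'I_n -> V) c x :
  SWd (fun j l => c *: B j l) x = c *: SWd B x.
Proof.
rewrite /SWd scaler_sumr; apply eq_bigr => j _; rewrite scaler_sumr; apply eq_bigr => l _.
by rewrite !scalerA mulrC.
Qed.

Lemma exch4 (V : nmodType) (F : 'I_n -> 'I_n -> 'I_n -> 'I_n -> V) :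
  \sum_a \sum_b \sum_c \sum_d F a b c d = \sum_c \sum_d \sum_a \sum_b F a b c d.
Proof.
under eq_bigr => a _ do rewrite exchange_big.
rewrite exchange_big; apply eq_bigr => c _.
under eq_bigr => a _ do rewrite exchange_big.
by rewrite exchange_big.
Qed.

Lemma SW_swap (V : lmodType k) (G : 'I_n -> 'I_n -> 'I_n -> 'I_n -> V) x y :
  SWd (fun a b => SWd (fun c d => G a b c d) y) x =
  SWd (fun c d => SWd (fun a b => G a b c d) x) y.
Proof.
rewrite /SWd.
transitivity (\sum_a \sum_b \sum_c \sum_d (comulA H x a b * comulA H y c d) *: G a b c d).
  apply eq_bigr => a _; apply eq_bigr => b _; rewrite scaler_sumr; apply eq_bigr => c _.
  by rewrite scaler_sumr; apply eq_bigr => d _; rewrite scalerA.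
rewrite exch4; apply eq_bigr => c _; apply eq_bigr => d _; rewrite scaler_sumr; apply eq_bigr => a _.
by rewrite scaler_sumr; apply eq_bigr => b _; rewrite scalerA mulrC.
Qed.

End Basic.


Section HopfAx.
Variables (k : fieldType) (n : nat) (H : hopf_data k n).
Hypothesis HH : is_hopf H.
Local Notation A := 'rV[k]_n.
Local Notation e := (@bvec k n).
Local Notation mul := (mulA H).
Local Notation S := (antiA H).
Local Notation eps := (epsA H).
Local Notation one := (oneA H).
Local Notation SW := (SWd H).

Lemma mulAA x y z : mul (mul x y) z = mul x (mul y z).
Proof. by case: HH. Qed.
Lemma mul1A x : mul one x = x.
Proof. by case: HH => _ h _ _ _; case: (h x). Qed.
Lemma mulA1 x : mul x one = x.
Proof. by case: HH => _ h _ _ _; case: (h x). Qed.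
Lemma epsM x y : eps (mul x y) = eps x * eps y.
Proof. by case: HH => _ _ _ _ [_ [h _] _]. Qed.
Lemma eps1 : eps one = 1.
Proof. by case: HH => _ _ _ _ [_ [_ h] _]. Qed.
Lemma SW_antil x : SW (fun j l => mul (S (e j)) (e l)) x = eps x *: one.
Proof. by case: HH => _ _ _ _ [_ _ h]; case: (h x). Qed.
Lemma SW_antir x : SW (fun j l => mul (e j) (S (e l))) x = eps x *: one.
Proof. by case: HH => _ _ _ _ [_ _ h]; case: (h x). Qed.

Lemma lin_sum (V : lmodType k) (F : 'I_n -> V) : lin (fun x : A => \sum_i x 0 i *: F i).
Proof.
apply: linP => c x y; rewrite scaler_sumr -big_split; apply eq_bigr => i _.
by rewrite !mxE scalerDl scalerA.
Qed.

Lemma sum_e (V : lmodType k) (F : 'I_n -> V) i : \sum_p e i 0 p *: F p = F i.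
Proof. by under eq_bigr => p _ do rewrite eE; rewrite sum_deltaV. Qed.

Lemma SW_epsr (V : lmodType k) (F : 'I_n -> V) x :
  SW (fun a b => hcounit H b *: F a) x = \sum_i x 0 i *: F i.
Proof.
move: x; apply: lin_eq; [exact: lin_SW | exact: lin_sum |] => i.
rewrite SW_e sum_e -[RHS]sum_deltaV; apply eq_bigr => a _.
case: HH => _ _ _ hc _; rewrite -(proj1 (hc i a)) scaler_suml; apply eq_bigr => b _.
by rewrite scalerA.
Qed.

Lemma SW_epsl (V : lmodType k) (F : 'I_n -> V) x :
  SW (fun a b => hcounit H a *: F b) x = \sum_i x 0 i *: F i.
Proof.
move: x; apply: lin_eq; [exact: lin_SW | exact: lin_sum |] => i.
rewrite SW_e sum_e exchange_big -[RHS]sum_deltaV; apply eq_bigr => b _.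
case: HH => _ _ _ hc _; rewrite -(proj2 (hc i b)) scaler_suml; apply eq_bigr => a _.
by rewrite scalerA.
Qed.

Lemma SW_epsr_e (V : lmodType k) (F : 'I_n -> V) i :
  SW (fun a b => hcounit H b *: F a) (e i) = F i.
Proof. by rewrite SW_epsr sum_e. Qed.
Lemma SW_epsl_e (V : lmodType k) (F : 'I_n -> V) i :
  SW (fun a b => hcounit H a *: F b) (e i) = F i.
Proof. by rewrite SW_epsl sum_e. Qed.

Lemma SW_coassoc (V : lmodType k) (G : 'I_n -> 'I_n -> 'I_n -> V) x :
  SW (fun a b => SW (fun c d => G c d b) (e a)) x =
  SW (fun a b => SW (fun c d => G a c d) (e b)) x.
Proof.
move: x; apply: lin_eq; [exact: lin_SW | exact: lin_SW |] => i.
transitivity (\sum_c \sum_d \sum_b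
   (\sum_a hcomul H i a b * hcomul H a c d) *: G c d b).
  rewrite SW_e.
  transitivity (\sum_a \sum_b \sum_c \sum_d (hcomul H i a b * hcomul H a c d) *: G c d b).
    apply eq_bigr => a _; apply eq_bigr => b _; rewrite SW_e scaler_sumr.
    apply eq_bigr => c _; rewrite scaler_sumr; apply eq_bigr => d _; by rewrite scalerA.
  rewrite exch4; apply eq_bigr => c _; apply eq_bigr => d _.
  by rewrite exchange_big; apply eq_bigr => b _; rewrite scaler_suml.
rewrite SW_e.
transitivity (\sum_a \sum_c \sum_d
   (\sum_b hcomul H i a b * hcomul H b c d) *: G a c d); last first.
  apply eq_bigr => a _.
  transitivity (\sum_b \sum_c \sum_d (hcomul H i a b * hcomul H b c d) *: G a c d).
    rewrite [RHS]exchange_big; apply eq_bigr => c _; rewrite [RHS]exchange_big; apply eq_bigr => d _.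
    by rewrite scaler_suml.
  apply eq_bigr => b _; rewrite SW_e scaler_sumr; apply eq_bigr => c _.
  by rewrite scaler_sumr; apply eq_bigr => d _; rewrite scalerA.
apply eq_bigr => c _; apply eq_bigr => d _; apply eq_bigr => b _.
by case: HH => _ _ hca _ _; rewrite hca.
Qed.

Lemma bilin_expand (V : lmodType k) (f : A -> A -> V)
  (hl : forall v, lin (fun u => f u v)) (hr : forall u, lin (f u)) u v :
  f u v = \sum_j \sum_l (u 0 j * v 0 l) *: f (e j) (e l).
Proof.
rewrite (hl v u); apply eq_bigr => j _; rewrite (hr (e j) v) scaler_sumr.
by apply eq_bigr => l _; rewrite scalerA.
Qed.

Lemma SW_mul (V : lmodType k) (f : A -> A -> V)
  (hl : forall v, lin (fun u => f u v)) (hr : forall u, lin (f u)) x y :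
  SW (fun j l => f (e j) (e l)) (mul x y) =
  SW (fun a b => SW (fun c d => f (mul (e a) (e c)) (mul (e b) (e d))) y) x.
Proof.
case: HH => _ _ _ _ [[hdm _] _ _].
rewrite /SWd hdm.
transitivity (\sum_j \sum_l \sum_a \sum_b \sum_c \sum_d
   ((comulA H x a b * comulA H y c d) * (hmul H a c j * hmul H b d l)) *: f (e j) (e l)).
  apply eq_bigr => j _; apply eq_bigr => l _; rewrite mxE !scaler_suml.
  apply eq_bigr => a _; rewrite !scaler_suml; apply eq_bigr => b _; rewrite !scaler_suml.
  apply eq_bigr => c _; rewrite !scaler_suml; apply eq_bigr => d _.
  by rewrite !mulrA.
transitivity (\sum_a \sum_b \sum_c \sum_d \sum_j \sum_l
   ((comulA H x a b * comulA H y c d) * (hmul H a c j * hmul H b d l)) *: f (e j) (e l)).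
  rewrite exch4; apply eq_bigr => a _; apply eq_bigr => b _.
  by rewrite exch4.
apply eq_bigr => a _; apply eq_bigr => b _; rewrite scaler_sumr; apply eq_bigr => c _.
rewrite scaler_sumr; apply eq_bigr => d _; rewrite scalerA.
rewrite (bilin_expand hl hr) scaler_sumr; apply eq_bigr => j _.
rewrite scaler_sumr; apply eq_bigr => l _; rewrite scalerA !mulE_e.
by [].
Qed.

Lemma SW_one (V : lmodType k) (B : 'I_n -> 'I_n -> V) :
  SW B one = \sum_j \sum_l (one 0 j * one 0 l) *: B j l.
Proof.
case: HH => _ _ _ _ [[_ h1] _ _]; rewrite /SWd h1.
apply eq_bigr => j _; apply eq_bigr => l _; congr (_ *: _).
rewrite mxE big_ord1 mxE; done.
Qed.

End HopfAx.


Section Anti.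
Variables (k : fieldType) (n : nat) (H : hopf_data k n).
Hypothesis HH : is_hopf H.
Local Notation A := 'rV[k]_n.
Local Notation e := (@bvec k n).
Local Notation mul := (mulA H).
Local Notation S := (antiA H).
Local Notation eps := (epsA H).
Local Notation one := (oneA H).
Local Notation SW := (SWd H).

Lemma S_mul_e p q : S (mul (e p) (e q)) = mul (S (e q)) (S (e p)).
Proof.
symmetry.
transitivity (SW (fun a b => SW (fun c d =>
   (hcounit H b * hcounit H d) *: mul (S (e c)) (S (e a))) (e q)) (e p)).
  symmetry.
  under eq_SW => a b.
    under eq_SW => c d do rewrite -scalerA.
    rewrite SW_scale (SW_epsr_e HH).
    over.
  by rewrite /= (SW_epsr_e HH).
transitivity (SW (fun a b => SW (fun c d => mul (mul (S (e c)) (S (e a)))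
   (SW (fun j l => mul (e j) (S (e l))) (mul (e b) (e d)))) (e q)) (e p)).
  apply eq_SW => a b; apply eq_SW => c d.
  by rewrite (SW_antir HH) (epsM HH) !eps_e (linZ (lin_mulr _ _)) (mulA1 HH).
transitivity (SW (fun a b => SW (fun c d =>
   SW (fun r1 s1 => SW (fun r2 s2 =>
     mul (mul (S (e c)) (S (e a))) (mul (mul (e r1) (e r2)) (S (mul (e s1) (e s2)))))
   (e d)) (e b)) (e q)) (e p)).
  apply eq_SW => a b; apply eq_SW => c d.
  set M := mul (S (e c)) (S (e a)).
  rewrite (SW_map _ _ _ (lin_mulr _ _)).
  apply: (SW_mul HH (f := fun u v => mul M (mul u (S v)))).
    move=> v; exact: (lin_comp (f := fun u => mul u (S v)) (g := mul M) (lin_mull _ _) (lin_mulr _ _)).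
  move=> u; apply: (lin_comp (f := fun v => mul u (S v)) (g := mul M) _ (lin_mulr _ _)).
  exact: (lin_comp (f := S) (g := mul u) (lin_S _) (lin_mulr _ _)).
transitivity (SW (fun a b => SW (fun r1 s1 => SW (fun c d => SW (fun r2 s2 =>
     mul (mul (S (e c)) (S (e a))) (mul (mul (e r1) (e r2)) (S (mul (e s1) (e s2)))))
   (e d)) (e q)) (e b)) (e p)).
  by apply eq_SW => a b; exact: SW_swap.
transitivity (SW (fun u s1 => SW (fun a r1 => SW (fun c d => SW (fun r2 s2 =>
     mul (mul (S (e c)) (S (e a))) (mul (mul (e r1) (e r2)) (S (mul (e s1) (e s2)))))
   (e d)) (e q)) (e u)) (e p)).
  symmetry.
  exact: (SW_coassoc HH (fun a r1 s1 => SW (fun c d => SW (fun r2 s2 =>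
     mul (mul (S (e c)) (S (e a))) (mul (mul (e r1) (e r2)) (S (mul (e s1) (e s2)))))
   (e d)) (e q))).
transitivity (SW (fun u s1 => SW (fun c d => SW (fun r2 s2 => SW (fun a r1 =>
     mul (mul (S (e c)) (S (e a))) (mul (mul (e r1) (e r2)) (S (mul (e s1) (e s2)))))
   (e u)) (e d)) (e q)) (e p)).
  apply eq_SW => u s1.
  etransitivity; first exact: SW_swap.
  apply eq_SW => c d; exact: SW_swap.
transitivity (SW (fun u s1 => SW (fun c d => SW (fun r2 s2 =>
     hcounit H u *: mul (S (e c)) (mul (e r2) (S (mul (e s1) (e s2)))))
   (e d)) (e q)) (e p)).
  apply eq_SW => u s1; apply eq_SW => c d; apply eq_SW => r2 s2.
  pose Psi := fun z => mul (S (e c)) (mul (mul z (e r2)) (S (mul (e s1) (e s2)))).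
  have linPsi : lin Psi.
    apply: (lin_comp (f := fun z => mul (mul z (e r2)) (S (mul (e s1) (e s2)))) _ (lin_mulr _ _)).
    exact: (lin_comp (f := fun z => mul z (e r2)) (lin_mull _ _) (lin_mull _ _)).
  transitivity (SW (fun a r1 => Psi (mul (S (e a)) (e r1))) (e u)).
    by apply eq_SW => a r1; rewrite /Psi !(mulAA HH).
  transitivity (Psi (SW (fun a r1 => mul (S (e a)) (e r1)) (e u))).
    by symmetry; exact: SW_map.
  by rewrite (SW_antil HH) (linZ linPsi) /Psi (mul1A HH) eps_e.
transitivity (SW (fun c d => SW (fun r2 s2 =>
     mul (S (e c)) (mul (e r2) (S (mul (e p) (e s2)))))
   (e d)) (e q)).
  transitivity (SW (fun u s1 => hcounit H u *: SW (fun c d => SW (fun r2 s2 =>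
     mul (S (e c)) (mul (e r2) (S (mul (e s1) (e s2)))))
   (e d)) (e q)) (e p)).
    apply eq_SW => u s1; rewrite -SW_scale; apply eq_SW => c d; by rewrite -SW_scale.
  exact: (SW_epsl_e HH (fun s1 => SW (fun c d => SW (fun r2 s2 =>
     mul (S (e c)) (mul (e r2) (S (mul (e s1) (e s2))))) (e d)) (e q))).
transitivity (SW (fun v s2 => SW (fun c r2 =>
     mul (S (e c)) (mul (e r2) (S (mul (e p) (e s2)))))
   (e v)) (e q)).
  symmetry.
  exact: (SW_coassoc HH (fun c r2 s2 => mul (S (e c)) (mul (e r2) (S (mul (e p) (e s2)))))).
transitivity (SW (fun v s2 => hcounit H v *: S (mul (e p) (e s2))) (e q)).
  apply eq_SW => v s2.
  set Z := S (mul (e p) (e s2)).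
  transitivity (SW (fun c r2 => mul (mul (S (e c)) (e r2)) Z) (e v)).
    by apply eq_SW => c r2; rewrite (mulAA HH).
  transitivity (mul (SW (fun c r2 => mul (S (e c)) (e r2)) (e v)) Z).
    by symmetry; apply: (@SW_map _ _ H _ (fun w => mul w Z)); exact: lin_mull.
  by rewrite (SW_antil HH) (linZ (lin_mull _ _)) (mul1A HH) eps_e.
exact: (SW_epsl_e HH (fun s2 => S (mul (e p) (e s2)))).
Qed.

End Anti.


Section Anti2.
Variables (k : fieldType) (n : nat) (H : hopf_data k n).
Hypothesis HH : is_hopf H.
Local Notation A := 'rV[k]_n.
Local Notation e := (@bvec k n).
Local Notation mul := (mulA H).
Local Notation S := (antiA H).
Local Notation eps := (epsA H).
Local Notation one := (oneA H).
Local Notation SW := (SWd H).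

Lemma lin_SWf (V : lmodType k) (F : 'I_n -> 'I_n -> A -> V) x :
  (forall a b, lin (F a b)) -> lin (fun w => SW (fun a b => F a b w) x).
Proof.
move=> hF; apply: linP => c u v.
rewrite -SW_scale /SWd -big_split; apply eq_bigr => a _; rewrite -big_split.
apply eq_bigr => b _; by rewrite (linD (hF a b)) (linZ (hF a b)) scalerDr !scalerA mulrC.
Qed.

Lemma S_mul x y : S (mul x y) = mul (S y) (S x).
Proof.
move: x; apply: lin_eq.
- exact: (lin_comp (f := fun x => mul x y) (lin_mull _ _) (lin_S _)).
- exact: (lin_comp (f := S) (lin_S _) (lin_mulr _ _)).
move=> p; move: y; apply: lin_eq.
- exact: (lin_comp (f := fun y => mul (e p) y) (lin_mulr _ _) (lin_S _)).
- exact: (lin_comp (f := S) (g := fun z => mul z (S (e p))) (lin_S _) (lin_mull _ _)).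
by move=> q; rewrite S_mul_e.
Qed.

Lemma S_one : S one = one.
Proof.
rewrite -[LHS](mulA1 HH) (bilin_expand (f := fun u v => mul (S u) v)).
- by rewrite -(SW_one HH) (SW_antil HH) eps1 // scale1r.
- move=> v; exact: (lin_comp (f := S) (lin_S _) (lin_mull _ _)).
- move=> u; exact: lin_mulr.
Qed.

Lemma eps_sum (I : Type) (r : seq I) (P : pred I) (F : I -> A) :
  eps (\sum_(i <- r | P i) F i) = \sum_(i <- r | P i) eps (F i).
Proof.
elim/big_rec2: _ => [|i y1 y2 _ <-]; last by rewrite epsD.
by rewrite /epsA big1 // => i _; rewrite mxE mul0r.
Qed.

Lemma eps_S x : eps (S x) = eps x.
Proof.
have h : forall i, eps (S (e i)) = eps (e i).
  move=> i.
  have := congr1 eps (SW_antil HH (e i)); rewrite epsZ eps1 // mulr1 => <-.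
  rewrite /SWd eps_sum.
  transitivity (\sum_j (\sum_l hcomul H i j l * hcounit H l) * eps (S (e j))).
    rewrite (bigD1 i) //= [X in _ + X]big1 ?addr0; last first.
      move=> j /negbTE ji; case: HH => _ _ _ hc _; by rewrite (proj1 (hc i j)) ji mul0r.
    case: HH => _ _ _ hc _; by rewrite (proj1 (hc i i)) eqxx mul1r.
  apply eq_bigr => j _; rewrite eps_sum mulr_suml; apply eq_bigr => l _.
  by rewrite epsZ (epsM HH) comul_e eps_e -mulrA [hcounit H l * _]mulrC.
rewrite (lin_S _ x) eps_sum eps_lin; apply eq_bigr => i _; by rewrite epsZ h.
Qed.

Lemma eps_one_one (V : lmodType k) (K : A -> A -> V)
  (hl : forall v, lin (fun u => K u v)) (hr : forall u, lin (K u)) al :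
  hcounit H al *: K one one =
  SW (fun g d => SW (fun u v => SW (fun p q => K (mul (e u) (e p)) (mul (e v) (e q)))
       (e d)) (S (e g))) (e al).
Proof.
symmetry.
transitivity (SW (fun g d => SW (fun j l => K (e j) (e l)) (mul (S (e g)) (e d))) (e al)).
  apply eq_SW => g d; symmetry; exact: (SW_mul HH hl hr).
transitivity (SW (fun j l => K (e j) (e l)) (SW (fun g d => mul (S (e g)) (e d)) (e al))).
  symmetry; apply: SW_map; exact: lin_SW.
rewrite (SW_antil HH) (linZ (lin_SW _ _)) eps_e (SW_one HH); congr (_ *: _).
by rewrite [RHS](bilin_expand hl hr).
Qed.

Lemma anti_swap (V : lmodType k) (F : A -> A -> V)
  (hl : forall v, lin (fun u => F u v)) (hr : forall u, lin (F u)) mu :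
  SW (fun d b0 => SW (fun p q => SW (fun a b => F (mul (e p) (S (e b))) (mul (e q) (S (e a))))
     (e b0)) (e d)) (e mu) = hcounit H mu *: F one one.
Proof.
transitivity (SW (fun p nu => SW (fun q b0 => SW (fun a b =>
   F (mul (e p) (S (e b))) (mul (e q) (S (e a)))) (e b0)) (e nu)) (e mu)).
  exact: (SW_coassoc HH (fun p q b0 => SW (fun a b => F (mul (e p) (S (e b))) (mul (e q) (S (e a)))) (e b0))).
transitivity (SW (fun p nu => SW (fun rho b => SW (fun q a =>
   F (mul (e p) (S (e b))) (mul (e q) (S (e a)))) (e rho)) (e nu)) (e mu)).
  apply eq_SW => p nu; symmetry.
  exact: (SW_coassoc HH (fun q a b => F (mul (e p) (S (e b))) (mul (e q) (S (e a))))).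
transitivity (SW (fun p nu => SW (fun rho b =>
   hcounit H rho *: F (mul (e p) (S (e b))) one) (e nu)) (e mu)).
  apply eq_SW => p nu; apply eq_SW => rho b.
  transitivity (F (mul (e p) (S (e b))) (SW (fun q a => mul (e q) (S (e a))) (e rho))).
    symmetry; apply: SW_map; exact: hr.
  by rewrite (SW_antir HH) (linZ (hr _)) eps_e.
transitivity (SW (fun p nu => F (mul (e p) (S (e nu))) one) (e mu)).
  apply eq_SW => p nu; exact: (SW_epsl_e HH (fun b => F (mul (e p) (S (e b))) one)).
transitivity (F (SW (fun p nu => mul (e p) (S (e nu))) (e mu)) one).
  symmetry; apply: (@SW_map _ _ H _ (fun X => F X one)); exact: hl.
by rewrite (SW_antir HH) (linZ (hl _)) eps_e.
Qed.

Lemma SW_S_e (V : lmodType k) (f : A -> A -> V)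
  (hl : forall v, lin (fun u => f u v)) (hr : forall u, lin (f u)) i :
  SW (fun j l => f (e j) (e l)) (S (e i)) = SW (fun a b => f (S (e b)) (S (e a))) (e i).
Proof.
symmetry.
transitivity (SW (fun al be => hcounit H al *: SW (fun a b =>
   f (mul one (S (e b))) (mul one (S (e a)))) (e be)) (e i)).
  rewrite (SW_epsl_e HH); apply eq_SW => a b; by rewrite !(mul1A HH).
transitivity (SW (fun al be => SW (fun g d => SW (fun u v => SW (fun p q =>
   SW (fun a b => f (mul (mul (e u) (e p)) (S (e b))) (mul (mul (e v) (e q)) (S (e a)))) (e be))
   (e d)) (S (e g))) (e al)) (e i)).
  apply eq_SW => al be.
  apply: (eps_one_one (K := fun X Y => SW (fun a b => f (mul X (S (e b))) (mul Y (S (e a)))) (e be))).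
    move=> Y; apply: lin_SWf => a b.
    exact: (lin_comp (f := fun X => mul X (S (e b))) (lin_mull _ _) (hl _)).
  move=> X; apply: lin_SWf => a b.
  exact: (lin_comp (f := fun Y => mul Y (S (e a))) (lin_mull _ _) (hr _)).
transitivity (SW (fun g mu => SW (fun d be => SW (fun u v => SW (fun p q =>
   SW (fun a b => f (mul (mul (e u) (e p)) (S (e b))) (mul (mul (e v) (e q)) (S (e a)))) (e be))
   (e d)) (S (e g))) (e mu)) (e i)).
  exact: (SW_coassoc HH (fun g d be => SW (fun u v => SW (fun p q =>
   SW (fun a b => f (mul (mul (e u) (e p)) (S (e b))) (mul (mul (e v) (e q)) (S (e a)))) (e be))
   (e d)) (S (e g)))).
transitivity (SW (fun g mu => SW (fun u v => SW (fun d be => SW (fun p q =>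
   SW (fun a b => f (mul (mul (e u) (e p)) (S (e b))) (mul (mul (e v) (e q)) (S (e a)))) (e be))
   (e d)) (e mu)) (S (e g))) (e i)).
  apply eq_SW => g mu; exact: SW_swap.
transitivity (SW (fun g mu => SW (fun u v =>
   hcounit H mu *: f (mul (e u) one) (mul (e v) one)) (S (e g))) (e i)).
  apply eq_SW => g mu; apply eq_SW => u v.
  transitivity (SW (fun d be => SW (fun p q => SW (fun a b =>
     (fun X Y => f (mul (e u) X) (mul (e v) Y)) (mul (e p) (S (e b))) (mul (e q) (S (e a))))
     (e be)) (e d)) (e mu)).
    apply eq_SW => d be; apply eq_SW => p q; apply eq_SW => a b; by rewrite /= !(mulAA HH).
  apply: (anti_swap (F := fun X Y => f (mul (e u) X) (mul (e v) Y))).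
    move=> Y; exact: (lin_comp (f := fun X => mul (e u) X) (lin_mulr _ _) (hl _)).
  move=> X; exact: (lin_comp (f := fun Y => mul (e v) Y) (lin_mulr _ _) (hr _)).
transitivity (SW (fun g mu => hcounit H mu *: SW (fun u v => f (e u) (e v)) (S (e g))) (e i)).
  apply eq_SW => g mu; rewrite -SW_scale; apply eq_SW => u v; by rewrite !(mulA1 HH).
exact: (SW_epsr_e HH (fun g => SW (fun u v => f (e u) (e v)) (S (e g)))).
Qed.

Lemma SW_S (V : lmodType k) (f : A -> A -> V)
  (hl : forall v, lin (fun u => f u v)) (hr : forall u, lin (f u)) x :
  SW (fun j l => f (e j) (e l)) (S x) = SW (fun a b => f (S (e b)) (S (e a))) x.
Proof.
move: x; apply: lin_eq.
- exact: (lin_comp (f := S) (lin_S _) (lin_SW _ _)).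
- exact: lin_SW.
by move=> i; apply: SW_S_e.
Qed.

End Anti2.


Lemma rev_iota_map (T : Type) (f : nat -> T) N :
  rev [seq f (N - i)%N | i <- iota 0 N] = [seq f i | i <- iota 1 N].
Proof.
elim: N => [//|N IH].
have e1 : iota 0 N.+1 = 0 :: [seq i.+1 | i <- iota 0 N].
  by rewrite /= -(iotaDl 1 0 N).
rewrite e1 map_cons rev_cons subn0.
have -> : [seq f (N.+1 - i)%N | i <- [seq i.+1 | i <- iota 0 N]] = [seq f (N - i)%N | i <- iota 0 N].
  by rewrite -map_comp; apply eq_map => i /=; rewrite subSS.
have := iotaD 1 N 1; rewrite addn1 add1n => ->.
by rewrite IH map_cat cats1.
Qed.

Section SwLemmas.
Variables (k : fieldType) (n : nat) (H : hopf_data k n).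
Hypothesis HH : is_hopf H.
Local Notation A := 'rV[k]_n.
Local Notation e := (@bvec k n).
Local Notation mul := (mulA H).
Local Notation S := (antiA H).
Local Notation eps := (epsA H).
Local Notation one := (oneA H).
Local Notation SW := (SWd H).
Local Notation sw := (sw H).

Lemma sw_cons F fs x : sw (F :: fs) x = SW (fun j l => mul (e j *m F) (sw fs (e l))) x.
Proof. by []. Qed.

Lemma lin_sw fs : lin (sw fs).
Proof.
case: fs => [|F fs]; last exact: lin_SW.
by apply: linP => c x y; rewrite /= epsD epsZ scalerDl scalerA.
Qed.

Lemma lin_mxr (F : 'M[k]_n) : lin (fun v : A => v *m F).
Proof. by apply: linP => c x y; rewrite mulmxDl scalemxAl. Qed.

Lemma sw_rcons gs F y :
  sw (rcons gs F) y = SW (fun j l => mul (sw gs (e j)) (e l *m F)) y.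
Proof.
elim: gs y => [|G gs IH] y /=.
  transitivity (\sum_i y 0 i *: (e i *m F)).
    rewrite -(SW_epsr HH); apply eq_SW => j l.
    by rewrite (linZ (lin_mulr _ _)) (mulA1 HH) eps_e.
  rewrite -(SW_epsl HH); apply eq_SW => j l.
  by rewrite (linZ (lin_mull _ _)) (mul1A HH) eps_e.
transitivity (SW (fun a b => SW (fun c d => mul (e a *m G) (mul (sw gs (e c)) (e d *m F))) (e b)) y).
  apply eq_SW => a b; rewrite IH; exact: SW_map (lin_mulr _ _).
transitivity (SW (fun u d => SW (fun a c => mul (e a *m G) (mul (sw gs (e c)) (e d *m F))) (e u)) y).
  symmetry; exact: (SW_coassoc HH (fun a c d => mul (e a *m G) (mul (sw gs (e c)) (e d *m F)))).
apply eq_SW => u d.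
transitivity (SW (fun a c => mul (mul (e a *m G) (sw gs (e c))) (e d *m F)) (e u)).
  by apply eq_SW => a c; rewrite (mulAA HH).
symmetry; apply: (@SW_map _ _ H _ (fun w => mul w (e d *m F))); exact: lin_mull.
Qed.

Lemma S_sw fs x : (forall F, F \in fs -> forall z, S (z *m F) = S z *m F) ->
  S (sw fs x) = sw (rev fs) (S x).
Proof.
elim: fs x => [|F fs IH] x hF /=.
  by rewrite /antiA -scalemxAl -/(antiA H one) (S_one HH) (eps_S HH).
rewrite rev_cons sw_rcons (SW_map _ _ _ (lin_S _)).
transitivity (SW (fun j l => mul (sw (rev fs) (S (e l))) (S (e j) *m F)) x).
  apply eq_SW => j l; rewrite (S_mul HH) IH; last first.
    by move=> G hG; apply: hF; rewrite in_cons hG orbT.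
  by rewrite hF // mem_head.
symmetry; apply: (SW_S HH (f := fun u v => mul (sw (rev fs) u) (v *m F))).
  move=> v; exact: (lin_comp (f := sw (rev fs)) (lin_sw _) (lin_mull _ _)).
move=> u; exact: (lin_comp (f := fun v => v *m F) (lin_mxr _) (lin_mulr _ _)).
Qed.

Lemma sw_mulM (M : 'M[k]_n) fs x :
  (forall u v, mul (u *m M) (v *m M) = mul u v *m M) -> one *m M = one ->
  sw fs x *m M = sw [seq F *m M | F <- fs] x.
Proof.
move=> hM h1; elim: fs x => [|F fs IH] x /=.
  by rewrite -scalemxAl h1.
rewrite (@SW_map _ _ H _ (fun v => v *m M)); last exact: lin_mxr.
by apply eq_SW => j l; rewrite -hM IH mulmxA.
Qed.

End SwLemmas.


Section Integrals.
Variables (k : fieldType) (n : nat) (H : hopf_data k n).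
Hypothesis HH : is_hopf H.
Local Notation A := 'rV[k]_n.
Local Notation e := (@bvec k n).
Local Notation mul := (mulA H).
Local Notation S := (antiA H).
Local Notation eps := (epsA H).
Local Notation one := (oneA H).
Local Notation SW := (SWd H).

Lemma entry_sum (I : Type) (r : seq I) (P : pred I) (F : I -> A) i :
  (\sum_(j <- r | P j) F j) 0 i = \sum_(j <- r | P j) F j 0 i.
Proof.
elim/big_rec2: _ => [|j y1 y2 _ <-]; first by rewrite mxE.
by rewrite mxE.
Qed.

Lemma entry_scale c (v : A) i : (c *: v) 0 i = c * v 0 i.
Proof. by rewrite mxE. Qed.

Lemma evalf_e (phi : 'cV[k]_n) j : evalf phi (e j) = phi j 0.
Proof.
rewrite /evalf mxE (bigD1 j) //= [X in _ + X]big1 ?addr0 ?eE ?eqxx ?mul1r //.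
by move=> p /negbTE pj; rewrite eE pj mul0r.
Qed.

Lemma evalfDZ (phi : 'cV[k]_n) c x y :
  evalf phi (c *: x + y) = c * evalf phi x + evalf phi y.
Proof. by rewrite /evalf mulmxDl -scalemxAl !mxE. Qed.

Lemma evalf_sum (phi : 'cV[k]_n) (I : Type) (r : seq I) (P : pred I) (F : I -> A) :
  evalf phi (\sum_(j <- r | P j) F j) = \sum_(j <- r | P j) evalf phi (F j).
Proof.
apply: big_morph => [x y|]; first by have := evalfDZ phi 1 x y; rewrite scale1r mul1r.
by rewrite /evalf mul0mx mxE.
Qed.

Lemma evalfZ (phi : 'cV[k]_n) c x : evalf phi (c *: x) = c * evalf phi x.
Proof.
have h0 : evalf phi 0 = 0 by rewrite /evalf mul0mx mxE.
by have := evalfDZ phi c x 0; rewrite !addr0 h0 addr0. Qed.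

Lemma lin_evs (phi : 'cV[k]_n) (v : A) : lin (fun u => evalf phi u *: v).
Proof. by apply: linP => c x y; rewrite evalfDZ scalerDl scalerA. Qed.

Lemma SW_coef (B : 'I_n -> 'I_n -> k) x :
  SW (fun j l => B j l *: e l) x = \sum_l (\sum_j comulA H x j l * B j l) *: e l.
Proof.
rewrite /SWd exchange_big; apply eq_bigr => l _; rewrite scaler_suml.
by apply eq_bigr => j _; rewrite scalerA.
Qed.

Lemma ev_delta (v : A) l : evalf (delta_mx l 0) v = v 0 l.
Proof.
rewrite /evalf mxE (bigD1 l) //= [X in _ + X]big1 ?addr0 ?mxE ?eqxx ?mulr1 //.
by move=> p /negbTE pl; rewrite mxE pl mulr0.
Qed.

Lemma dual_r_coef (lr : 'cV[k]_n) (hlr : right_integral_dual H lr) i l :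
  \sum_j hcomul H i j l * lr j 0 = one 0 l * lr i 0.
Proof.
have := congr1 (fun M : 'cV[k]_n => M i 0) (hlr (delta_mx l 0)).
rewrite /= ev_delta !mxE => <-; apply eq_bigr => j _.
rewrite (bigD1 l) //= [X in _ + X]big1 ?addr0 ?mxE ?eqxx ?mulr1 //.
by move=> p /negbTE pl; rewrite mxE pl mulr0.
Qed.

Lemma dual_l_coef (ll : 'cV[k]_n) (hll : left_integral_dual H ll) i j :
  \sum_l hcomul H i j l * ll l 0 = one 0 j * ll i 0.
Proof.
have := congr1 (fun M : 'cV[k]_n => M i 0) (hll (delta_mx j 0)).
rewrite /= ev_delta !mxE => <-; rewrite [in RHS](bigD1 j) //= [X in _ + X]big1 ?addr0.
  by apply eq_bigr => l _; rewrite mxE !eqxx mulr1.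
move=> p /negbTE pj; rewrite big1 // => l _; by rewrite mxE pj mulr0 mul0r.
Qed.

Lemma rint_dual (lr : 'cV[k]_n) (hlr : right_integral_dual H lr) b :
  SW (fun j l => lr j 0 *: e l) b = evalf lr b *: one.
Proof.
move: b; apply: lin_eq; [exact: lin_SW | exact: lin_evs |] => i.
rewrite SW_e exchange_big evalf_e [in RHS](row_expand one) scaler_sumr.
apply eq_bigr => l _.
transitivity ((\sum_j hcomul H i j l * lr j 0) *: e l).
  by rewrite scaler_suml; apply eq_bigr => j _; rewrite scalerA.
by rewrite dual_r_coef // scalerA mulrC.
Qed.

Lemma lint_dual (ll : 'cV[k]_n) (hll : left_integral_dual H ll) b :
  SW (fun j l => ll l 0 *: e j) b = evalf ll b *: one.
Proof.
move: b; apply: lin_eq; [exact: lin_SW | exact: lin_evs |] => i.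
rewrite SW_e evalf_e [in RHS](row_expand one) scaler_sumr.
apply eq_bigr => j _.
transitivity ((\sum_l hcomul H i j l * ll l 0) *: e j).
  by rewrite scaler_suml; apply eq_bigr => l _; rewrite scalerA.
by rewrite dual_l_coef // scalerA mulrC.
Qed.

Lemma rint_swap (V : lmodType k) (g : A -> A -> V)
  (hl : forall v, lin (fun u => g u v)) (hr : forall u, lin (g u))
  (Lr : A) (hL : right_integral H Lr) x :
  SW (fun j l => g (mul (e j) x) (e l)) Lr = SW (fun j l => g (e j) (mul (e l) (S x))) Lr.
Proof.
move: x; apply: lin_eq.
- apply: lin_SWf => j l; exact: (lin_comp (f := mul (e j)) (lin_mulr _ _) (hl _)).
- apply: lin_SWf => j l.
  exact: (lin_comp (f := fun x => mul (e l) (S x)) (lin_comp (lin_S _) (lin_mulr _ _)) (hr _)).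
move=> i.
transitivity (SW (fun a b => hcounit H b *: SW (fun j l => g (mul (e j) (e a)) (e l)) Lr) (e i)).
  by rewrite (SW_epsr_e HH).
transitivity (SW (fun a b => SW (fun j l => g (mul (e j) (e a))
   (mul (e l) (SW (fun c d => mul (e c) (S (e d))) (e b)))) Lr) (e i)).
  apply eq_SW => a b; rewrite -SW_scale; apply eq_SW => j l.
  by rewrite (SW_antir HH) eps_e (linZ (lin_mulr _ _)) (mulA1 HH) (linZ (hr _)).
transitivity (SW (fun a b => SW (fun c d => SW (fun j l =>
   g (mul (e j) (e a)) (mul (e l) (mul (e c) (S (e d))))) Lr) (e b)) (e i)).
  apply eq_SW => a b.
  transitivity (SW (fun j l => SW (fun c d =>
     g (mul (e j) (e a)) (mul (e l) (mul (e c) (S (e d))))) (e b)) Lr).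
    apply eq_SW => j l.
    apply: (@SW_map _ _ H _ (fun w => g (mul (e j) (e a)) (mul (e l) w))).
    exact: (lin_comp (f := mul (e l)) (lin_mulr _ _) (hr _)).
  exact: SW_swap.
transitivity (SW (fun u d => SW (fun a c => SW (fun j l =>
   g (mul (e j) (e a)) (mul (e l) (mul (e c) (S (e d))))) Lr) (e u)) (e i)).
  symmetry.
  exact: (SW_coassoc HH (fun a c d => SW (fun j l =>
    g (mul (e j) (e a)) (mul (e l) (mul (e c) (S (e d))))) Lr)).
transitivity (SW (fun u d => hcounit H u *:
   SW (fun p q => g (e p) (mul (e q) (S (e d)))) Lr) (e i)); last first.
  exact: (SW_epsl_e HH (fun d => SW (fun p q => g (e p) (mul (e q) (S (e d)))) Lr)).
apply eq_SW => u d.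
pose G' := fun X Y => g X (mul Y (S (e d))).
transitivity (SW (fun j l => SW (fun a c => G' (mul (e j) (e a)) (mul (e l) (e c))) (e u)) Lr).
  etransitivity; first exact: SW_swap.
  apply eq_SW => j l; apply eq_SW => a c; by rewrite /G' (mulAA HH).
transitivity (SW (fun p q => G' (e p) (e q)) (mul Lr (e u))).
  symmetry; apply: (SW_mul HH (f := G')).
    by move=> Y; exact: hl.
  move=> X; exact: (lin_comp (f := fun Y => mul Y (S (e d))) (lin_mull _ _) (hr _)).
by rewrite hL eps_e (linZ (lin_SW _ _)).
Qed.

Lemma lint_swap (V : lmodType k) (g : A -> A -> V)
  (hl : forall v, lin (fun u => g u v)) (hr : forall u, lin (g u))
  (Ll : A) (hL : left_integral H Ll) x :
  SW (fun j l => g (e j) (mul x (e l))) Ll = SW (fun j l => g (mul (S x) (e j)) (e l)) Ll.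
Proof.
move: x; apply: lin_eq.
- apply: lin_SWf => j l; exact: (lin_comp (f := fun x => mul x (e l)) (lin_mull _ _) (hr _)).
- apply: lin_SWf => j l.
  exact: (lin_comp (f := fun x => mul (S x) (e j)) (lin_comp (lin_S _) (lin_mull _ _)) (hl _)).
move=> i.
transitivity (SW (fun a b => hcounit H a *: SW (fun j l => g (e j) (mul (e b) (e l))) Ll) (e i)).
  by rewrite (SW_epsl_e HH).
transitivity (SW (fun a b => SW (fun j l =>
   g (mul (SW (fun c d => mul (S (e c)) (e d)) (e a)) (e j)) (mul (e b) (e l))) Ll) (e i)).
  apply eq_SW => a b; rewrite -SW_scale; apply eq_SW => j l.
  by rewrite (SW_antil HH) eps_e (linZ (lin_mull _ _)) (mul1A HH) (linZ (hl _)).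
transitivity (SW (fun a b => SW (fun c d => SW (fun j l =>
   g (mul (mul (S (e c)) (e d)) (e j)) (mul (e b) (e l))) Ll) (e a)) (e i)).
  apply eq_SW => a b.
  transitivity (SW (fun j l => SW (fun c d =>
     g (mul (mul (S (e c)) (e d)) (e j)) (mul (e b) (e l))) (e a)) Ll).
    apply eq_SW => j l.
    apply: (@SW_map _ _ H _ (fun w => g (mul w (e j)) (mul (e b) (e l)))).
    exact: (lin_comp (f := fun w => mul w (e j)) (lin_mull _ _) (hl _)).
  exact: SW_swap.
transitivity (SW (fun c u => SW (fun d b => SW (fun j l =>
   g (mul (mul (S (e c)) (e d)) (e j)) (mul (e b) (e l))) Ll) (e u)) (e i)).
  exact: (SW_coassoc HH (fun c d b => SW (fun j l =>
    g (mul (mul (S (e c)) (e d)) (e j)) (mul (e b) (e l))) Ll)).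
transitivity (SW (fun c u => hcounit H u *:
   SW (fun p q => g (mul (S (e c)) (e p)) (e q)) Ll) (e i)); last first.
  exact: (SW_epsr_e HH (fun c => SW (fun p q => g (mul (S (e c)) (e p)) (e q)) Ll)).
apply eq_SW => c u.
pose G' := fun X Y => g (mul (S (e c)) X) Y.
transitivity (SW (fun d b => SW (fun j l => G' (mul (e d) (e j)) (mul (e b) (e l))) Ll) (e u)).
  apply eq_SW => d b; apply eq_SW => j l; by rewrite /G' (mulAA HH).
transitivity (SW (fun p q => G' (e p) (e q)) (mul (e u) Ll)).
  symmetry; apply: (SW_mul HH (f := G')).
    move=> Y; exact: (lin_comp (f := fun X => mul (S (e c)) X) (lin_mulr _ _) (hl _)).
  by move=> X; exact: hr.
by rewrite hL eps_e (linZ (lin_SW _ _)).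
Qed.

Lemma lin_sev (phi : 'cV[k]_n) (u : A) : @lin k n 'rV[k]_n (fun v : A => evalf phi u *: v).
Proof. by apply: linP => c x y; rewrite scalerDr !scalerA mulrC. Qed.

Lemma S_rint (lr : 'cV[k]_n) (Lr : A) (hL : right_integral H Lr)
  (hlr : right_integral_dual H lr) (hnorm : evalf lr Lr = 1) x :
  S x = SW (fun j l => evalf lr (mul (e j) x) *: e l) Lr.
Proof.
transitivity (SW (fun j l => (fun u v => evalf lr u *: v) (e j) (mul (e l) (S x))) Lr);
  last first.
  symmetry; apply: (rint_swap (g := fun u v => evalf lr u *: v)) => //.
    by move=> v; exact: lin_evs.
  by move=> u; exact: lin_sev.
transitivity (mul (SW (fun j l => lr j 0 *: e l) Lr) (S x)).
  by rewrite rint_dual // hnorm scale1r (mul1A HH).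
rewrite (@SW_map _ _ H _ (fun w => mul w (S x))); last exact: lin_mull.
by apply eq_SW => j l; rewrite /= (linZ (lin_mull _ _)) evalf_e.
Qed.

Lemma S_lint (ll : 'cV[k]_n) (Ll : A) (hL : left_integral H Ll)
  (hll : left_integral_dual H ll) (hnorm : evalf ll Ll = 1) x :
  S x = SW (fun j l => evalf ll (mul x (e l)) *: e j) Ll.
Proof.
transitivity (SW (fun j l => (fun u v => evalf ll v *: u) (mul (S x) (e j)) (e l)) Ll);
  last first.
  symmetry; apply: (lint_swap (g := fun u v => evalf ll v *: u)) => //.
    by move=> v; exact: lin_sev.
  by move=> u; exact: lin_evs.
transitivity (mul (S x) (SW (fun j l => ll l 0 *: e j) Ll)).
  by rewrite lint_dual // hnorm scale1r (mulA1 HH).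
rewrite (@SW_map _ _ H _ (fun w => mul (S x) w)); last exact: lin_mulr.
by apply eq_SW => j l; rewrite /= (linZ (lin_mulr _ _)) evalf_e.
Qed.

End Integrals.


Section Traces.
Variables (k : fieldType) (n : nat) (H : hopf_data k n).
Hypothesis HH : is_hopf H.
Local Notation A := 'rV[k]_n.
Local Notation e := (@bvec k n).
Local Notation mul := (mulA H).
Local Notation S := (antiA H).
Local Notation eps := (epsA H).
Local Notation one := (oneA H).
Local Notation SW := (SWd H).
Local Notation sw := (sw H).

Lemma trace_r (lr : 'cV[k]_n) (Lr : A) (hL : right_integral H Lr)
  (hlr : right_integral_dual H lr) (hnorm : evalf lr Lr = 1) (h : A -> A) :
  \tr (mx_of_fun (fun x => S (h x))) = evalf lr (SW (fun j l => mul (e j) (h (e l))) Lr).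
Proof.
rewrite /mxtrace.
transitivity (\sum_i \sum_j \sum_l comulA H Lr j l *
   (evalf lr (mul (e j) (h (e i))) * (i == l)%:R)).
  apply eq_bigr => i _; rewrite mxE (S_rint HH hL hlr hnorm) /SWd entry_sum.
  apply eq_bigr => j _; rewrite entry_sum; apply eq_bigr => l _.
  by rewrite !entry_scale eE.
rewrite exchange_big /SWd evalf_sum; apply eq_bigr => j _.
rewrite exchange_big evalf_sum; apply eq_bigr => l _.
rewrite evalfZ -mulr_sumr; congr (_ * _).
by rewrite (sum_delta' (fun i => evalf lr (mul (e j) (h (e i))))).
Qed.

Lemma trace_l (ll : 'cV[k]_n) (Ll : A) (hL : left_integral H Ll)
  (hll : left_integral_dual H ll) (hnorm : evalf ll Ll = 1) (h : A -> A) :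
  \tr (mx_of_fun (fun x => S (h x))) = evalf ll (SW (fun j l => mul (h (e j)) (e l)) Ll).
Proof.
rewrite /mxtrace.
transitivity (\sum_i \sum_j \sum_l comulA H Ll j l *
   (evalf ll (mul (h (e i)) (e l)) * (i == j)%:R)).
  apply eq_bigr => i _; rewrite mxE (S_lint HH hL hll hnorm) /SWd entry_sum.
  apply eq_bigr => j _; rewrite entry_sum; apply eq_bigr => l _.
  by rewrite !entry_scale eE.
rewrite exchange_big /SWd evalf_sum; apply eq_bigr => j _.
rewrite exchange_big evalf_sum; apply eq_bigr => l _.
rewrite evalfZ -mulr_sumr; congr (_ * _).
by rewrite (sum_delta' (fun i => evalf ll (mul (h (e i)) (e l)))).
Qed.

End Traces.

Lemma mx_of_fun_comp (k : fieldType) (n : nat) (f g : 'rV[k]_n -> 'rV[k]_n) :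
  lin g -> mx_of_fun (fun x => g (f x)) = mx_of_fun f *m mx_of_fun g.
Proof.
move=> hg; apply/matrixP => i j; rewrite !mxE (hg (f _)) entry_sum.
by apply eq_bigr => p _; rewrite entry_scale !mxE.
Qed.

Lemma mx_of_fun_ext (k : fieldType) (n : nat) (f g : 'rV[k]_n -> 'rV[k]_n) :
  (forall i, f (@bvec k n i) = g (@bvec k n i)) -> mx_of_fun f = mx_of_fun g.
Proof. by move=> h; apply/matrixP => i j; rewrite !mxE h. Qed.

Lemma pow_inv (k : fieldType) (n : nat) (T Ti : 'M[k]_n) :
  T *m Ti = 1%:M -> forall j, T ^+ j *m Ti ^+ j = 1%:M.
Proof.
move=> hTi; elim=> [|j IH]; first by rewrite !expr0 mulmx1.
rewrite exprSr exprS -!mulmxE -mulmxA (mulmxA T) hTi mul1mx; exact: IH.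
Qed.

Lemma pow_key (k : fieldType) (n : nat) (T Ti : 'M[k]_n) N :
  T *m Ti = 1%:M -> T ^+ N.+1 = 1%:M -> forall i, (i <= N)%N ->
  Ti ^+ i *m Ti = T ^+ (N - i).
Proof.
move=> hTi hTm i hi.
rewrite -[RHS]mulmx1 -(pow_inv hTi i.+1) mulmxA mulmxE -exprD.
have -> : (N - i + i.+1 = N.+1)%N by rewrite addnS subnK.
rewrite hTm -mulmxE mul1mx exprSr mulmxE.
done.
Qed.


Theorem corollary5p2 (k : fieldType) (n : nat) (H : hopf_data k n)
  (HH : is_hopf H) (T : 'M[k]_n) (hT : is_hopf_aut H T)
  (m : nat) (hm : (0 < m)%N) (hTm : T ^+ m = 1%:M) :
  (forall (Lr : 'rV[k]_n) (lr : 'cV[k]_n),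
     right_integral H Lr -> right_integral_dual H lr -> evalf lr Lr = 1 ->
     nu H m T = evalf lr (hbracket H m T Lr))
  /\
  (forall (Ll : 'rV[k]_n) (ll : 'cV[k]_n),
     left_integral H Ll -> left_integral_dual H ll -> evalf ll Ll = 1 ->
     nu H m T = evalf ll (hbracket H m (invmx T) Ll *m invmx T)).
Proof.
case: hT => hu [hTmul hT1] _ _ hTS.
have hS : forall j (z : 'rV[k]_n), antiA H (z *m T ^+ j) = antiA H z *m T ^+ j.
  elim=> [|j IH] z; first by rewrite expr0 !mulmx1.
  by rewrite exprS -mulmxE !mulmxA IH hTS.
case: m hm hTm => [//|N] _ hTm.
split.
- move=> Lr lr hL hlr hnorm.
  rewrite /nu /Pmt /=.
  have hPS : forall F, F \in [seq T ^+ (N - i) | i <- iota 0 N] ->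
      forall z, antiA H (z *m F) = antiA H z *m F.
    by move=> F /mapP [i _ ->]; exact: hS.
  transitivity (\tr (mx_of_fun (fun x => sw H [seq T ^+ i | i <- iota 1 N] (antiA H x)))).
    congr (\tr _); apply: mx_of_fun_ext => i.
    by rewrite (S_sw HH) // (rev_iota_map (fun i => T ^+ i)).
  rewrite (@mx_of_fun_comp k n (antiA H)); last exact: lin_sw.
  rewrite mxtrace_mulC -mx_of_fun_comp; last exact: lin_S.
  rewrite (trace_r HH hL hlr hnorm) /hbracket /=.
  congr (evalf lr _); rewrite /SWd; apply eq_bigr => j _; apply eq_bigr => l _.
  by rewrite expr0 mulmx1.
- move=> Ll ll hL hll hnorm.
  rewrite /nu (trace_l HH hL hll hnorm) /Pmt /=.
  set Ti := invmx T.
  have hTi : T *m Ti = 1%:M := mulmxV hu.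
  have hTi' : Ti *m T = 1%:M := mulVmx hu.
  have hMi : forall u v, mulA H (u *m Ti) (v *m Ti) = mulA H u v *m Ti.
    move=> u v.
    by rewrite -[in RHS](mulmx1 u) -[in RHS](mulmx1 v) -hTi' !mulmxA hTmul -mulmxA hTi mulmx1.
  have hOi : oneA H *m Ti = oneA H by rewrite -[in LHS]hT1 -mulmxA hTi mulmx1.
  rewrite /hbracket (sw_mulM _ _ hMi hOi).
  have -> : SWd H (fun j l => mulA H (sw H [seq T ^+ (N - i) | i <- iota 0 N] (@bvec k n j)) (@bvec k n l)) Ll
      = sw H (rcons [seq T ^+ (N - i) | i <- iota 0 N] 1%:M) Ll.
    by rewrite (sw_rcons HH); apply eq_SW => j l; rewrite mulmx1.
  congr (evalf ll (sw H _ Ll)).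
  rewrite -map_comp.
  have := iotaD 0 N 1; rewrite addn1 add0n => ->.
  rewrite map_cat /= cats1; congr rcons.
    apply/eq_in_map => i; rewrite mem_iota add0n => /andP [_ hi] /=.
    by rewrite (pow_key hTi hTm) // ltnW.
  by rewrite (pow_key hTi hTm) // subnn expr0.
Qed.
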